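(* Let $R\in\mathbb R$ and let $f:[0,R)\to\mathbb R$ be continuously differentiable and satisfy (h1) $f(0)>0$, $f'(0)=-1$; (h2) $f'$ is strictly increasing and convex; (h3) $f(t)<0$ for some $t\in(0,R)$. Let $\beta:=\sup_{t\in[0,R)}-f(t)$, $t_*:=\min f^{-1}(\{0\})$, $\bar\tau:=\sup\{t\in[0,R):f(t)<0\}$ and $\bar t:=\sup\{t\in[0,R):f'(t)<0\}$. Then: (i) $f'(t)<0$ for all $t\in[0,\bar t)$, and $f'(t)\ge0$ for all $t\in[0,R)\setminus[0,\bar t)$; (ii) $0<t_*<\bar t\le\bar\tau\le R$; (iii) $\beta=-\lim_{t\to\bar t^-}f(t)$ and $0<\beta<\bar t$. *)

(* Defs.v *)
From Stdlib Require Import Reals.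
From Coquelicot Require Import Coquelicot.
Open Scope R_scope.

Definition dom (R0 : R) (t : R) : Prop := 0 <= t < R0.

Definition has_deriv_on (R0 : R) (f f' : R -> R) (t : R) : Prop :=
  filterlim (fun s => (f s - f t) / (s - t))
    (within (fun s => dom R0 s /\ s <> t) (locally t)) (locally (f' t)).

Definition cont_on (R0 : R) (g : R -> R) (t : R) : Prop :=
  filterlim g (within (dom R0) (locally t)) (locally (g t)).

Definition C1_on (R0 : R) (f f' : R -> R) : Prop :=
  forall t, dom R0 t -> has_deriv_on R0 f f' t /\ cont_on R0 f' t.

Definition strictly_increasing_on (R0 : R) (g : R -> R) : Prop :=
  forall x y, dom R0 x -> dom R0 y -> x < y -> g x < g y.

Definition convex_on (R0 : R) (g : R -> R) : Prop :=
  forall x y l, dom R0 x -> dom R0 y -> 0 <= l <= 1 ->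
    g (l * x + (1 - l) * y) <= l * g x + (1 - l) * g y.

Definition beta_of (R0 : R) (f : R -> R) : Rbar :=
  Lub_Rbar (fun x => exists t, dom R0 t /\ x = - f t).

(* tau_bar := sup {t in [0,R) | f t < 0}; the set is bounded by R and
   (under h3) nonempty, so the sup is a real number. *)
Definition taubar_of (R0 : R) (f : R -> R) : R :=
  real (Lub_Rbar (fun t => dom R0 t /\ f t < 0)).

(* t_bar := sup {t in [0,R) | f' t < 0}; nonempty (contains 0) and bounded. *)
Definition tbar_of (R0 : R) (f' : R -> R) : R :=
  real (Lub_Rbar (fun t => dom R0 t /\ f' t < 0)).

Definition is_min_zero (R0 : R) (f : R -> R) (t : R) : Prop :=
  dom R0 t /\ f t = 0 /\ (forall s, dom R0 s -> f s = 0 -> t <= s).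

(* Main.v *)
Require Import Defs.
From Stdlib Require Import Reals Lra Classical.
From Coquelicot Require Import Coquelicot.
Open Scope R_scope.

Lemma ballR (x e y : R) : ball x e y <-> Rabs (y - x) < e.
Proof. reflexivity. Qed.

Lemma deriv_eps R0 f f' t : has_deriv_on R0 f f' t -> forall eps, 0 < eps ->
  exists d, 0 < d /\ forall s, Rabs (s - t) < d -> dom R0 s -> s <> t ->
   Rabs ((f s - f t) / (s - t) - f' t) < eps.
Proof.
intros H eps he.
destruct (proj1 (filterlim_locally _ _) H (mkposreal eps he)) as [d Hd].
exists d; split; [apply cond_pos|].
intros s Hs Hd1 Hd2. apply (Hd s); [exact Hs| split; assumption].
Qed.

Lemma cont_eps R0 g t : cont_on R0 g t -> forall eps, 0 < eps ->
  exists d, 0 < d /\ forall s, Rabs (s - t) < d -> dom R0 s ->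
   Rabs (g s - g t) < eps.
Proof.
intros H eps he.
destruct (proj1 (filterlim_locally _ _) H (mkposreal eps he)) as [d Hd].
exists d; split; [apply cond_pos|].
intros s Hs Hd1. apply (Hd s); assumption.
Qed.

Definition ext (f f' : R -> R) x := if Rle_dec 0 x then f x else f 0 + f' 0 * x.

Lemma ext_eq f f' x : 0 <= x -> ext f f' x = f x.
Proof. intros H; unfold ext; destruct (Rle_dec 0 x); [reflexivity| lra]. Qed.

Lemma ext_deriv R0 f f' t : C1_on R0 f f' -> dom R0 t ->
  derivable_pt_lim (ext f f') t (f' t).
Proof.
intros HC Ht eps he.
destruct (deriv_eps _ _ _ _ (proj1 (HC t Ht)) eps he) as [d [dpos Hd]].
unfold dom in Ht.
destruct (Req_dec t 0) as [t0|tpos].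
- subst t.
  assert (P : 0 < Rmin d R0) by (apply Rmin_pos; lra).
  exists (mkposreal _ P). simpl. intros h hn hl.
  assert (hl1 : Rabs h < d) by (apply Rlt_le_trans with (1:=hl); apply Rmin_l).
  assert (hl2 : Rabs h < R0) by (apply Rlt_le_trans with (1:=hl); apply Rmin_r).
  rewrite (ext_eq f f' 0) by lra.
  destruct (Rle_dec 0 (0+h)) as [hp|hn'].
  + rewrite ext_eq by lra.
    apply Rabs_def2 in hl2.
    assert (K := Hd (0+h)); replace (0+h-0) with h in K by ring.
    apply K. exact hl1. split; lra. lra.
  + unfold ext. destruct (Rle_dec 0 (0+h)); [lra|].
    replace ((f 0 + f' 0 * (0 + h) - f 0) / h - f' 0) with 0 by (field; exact hn).
    rewrite Rabs_R0; lra.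
- assert (P : 0 < Rmin d (Rmin t (R0 - t))) by (repeat apply Rmin_pos; lra).
  exists (mkposreal _ P). simpl. intros h hn hl.
  assert (hl1 : Rabs h < d) by (apply Rlt_le_trans with (1:=hl); apply Rmin_l).
  assert (hl2 : Rabs h < Rmin t (R0-t)) by (apply Rlt_le_trans with (1:=hl); apply Rmin_r).
  assert (hl3 : Rabs h < t) by (apply Rlt_le_trans with (1:=hl2); apply Rmin_l).
  assert (hl4 : Rabs h < R0 - t) by (apply Rlt_le_trans with (1:=hl2); apply Rmin_r).
  apply Rabs_def2 in hl3. apply Rabs_def2 in hl4.
  rewrite (ext_eq f f' t) by lra. rewrite ext_eq by lra.
  assert (K := Hd (t+h)); replace (t+h-t) with h in K by ring.
  apply K. exact hl1. split; lra. lra.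
Qed.

Lemma mvt R0 f f' a b : C1_on R0 f f' -> 0 <= a -> a < b -> b < R0 ->
  exists c, a < c < b /\ f b - f a = f' c * (b - a).
Proof.
intros HC ha hab hb.
destruct (MVT_cor2 (ext f f') f' a b hab) as [c [Hc1 Hc2]].
intros c Hc. apply ext_deriv with R0; auto. split; lra.
exists c; split; auto. rewrite <- !(ext_eq f f') by lra. exact Hc1.
Qed.

Lemma ivt R0 f f' a b : C1_on R0 f f' -> 0 <= a -> a < b -> b < R0 ->
  f a > 0 -> f b < 0 -> exists z, a <= z <= b /\ f z = 0.
Proof.
intros HC ha hab hb fa fb.
destruct (Ranalysis5.IVT_interv (fun x => - ext f f' x) a b) as [z [Hz1 Hz2]].
- intros c Hc. apply continuity_pt_opp. apply derivable_continuous_pt.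
  exists (f' c). apply ext_deriv with R0; auto. split; lra.
- exact hab.
- rewrite ext_eq; lra.
- rewrite ext_eq; lra.
- exists z; split; auto. rewrite <- (ext_eq f f') by lra. lra.
Qed.

Lemma lub_fin (E : R -> Prop) x0 M : E x0 -> (forall x, E x -> x <= M) ->
  Lub_Rbar E = Finite (real (Lub_Rbar E)) /\
  (forall x, E x -> x <= real (Lub_Rbar E)) /\
  (forall M', (forall x, E x -> x <= M') -> real (Lub_Rbar E) <= M') /\
  (forall eps, 0 < eps -> exists x, E x /\ real (Lub_Rbar E) - eps < x).
Proof.
intros H0 HM.
destruct (Lub_Rbar_correct E) as [Hub Hl].
destruct (Lub_Rbar E) as [r| |] eqn:El.
- simpl. assert (L3 : forall M', (forall x, E x -> x <= M') -> r <= M').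
  { intros M' HM'. apply (Hl (Finite M')). intros x Hx. apply HM'; auto. }
  split; [reflexivity|]. split; [intros x Hx; apply (Hub x Hx)|]. split; [exact L3|].
  intros eps he. apply NNPP. intros Hn.
  assert (r <= r - eps); [|lra]. apply L3. intros x Hx.
  apply Rnot_lt_le. intros Hlt. apply Hn. exists x; auto.
- exfalso. apply (Hl (Finite M)). intros x Hx. apply HM; auto.
- exfalso. apply (Hub x0 H0).
Qed.

Theorem proposition2p3 (R0 : R) (f f' : R -> R)
  (hC1 : C1_on R0 f f')
  (h1a : f 0 > 0) (h1b : f' 0 = -1)
  (h2a : strictly_increasing_on R0 f') (h2b : convex_on R0 f')
  (h3 : exists t, 0 < t < R0 /\ f t < 0) :
  let beta := beta_of R0 f in
  let taubar := taubar_of R0 f in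
  let tbar := tbar_of R0 f' in
  (* (i) *)
  (forall t, 0 <= t < tbar -> f' t < 0) /\
  (forall t, dom R0 t -> ~ (0 <= t < tbar) -> 0 <= f' t) /\
  (* (ii) *)
  (exists tstar, is_min_zero R0 f tstar /\
     0 < tstar /\ tstar < tbar /\ tbar <= taubar /\ taubar <= R0) /\
  (* (iii) *)
  (exists b : R, beta = Finite b /\
     filterlim f (at_left tbar) (locally (- b)) /\
     0 < b /\ b < tbar).
Proof.
intros beta taubar tbar.
unfold beta, taubar, tbar, beta_of, taubar_of, tbar_of; clear beta taubar tbar.
destruct h3 as [t1 [[t1p t1R] ft1]].
assert (R0pos : 0 < R0) by lra.
assert (fpm1 : forall c, 0 < c < R0 -> f' c > -1).
{ intros c Hc. rewrite <- h1b. apply h2a; unfold dom; lra. }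
destruct (lub_fin (fun t => dom R0 t /\ f' t < 0) 0 R0) as [Tfin [Tub [Tl Tapp]]].
{ split; [split; lra | lra]. }
{ intros x [[_ Hx] _]; lra. }
set (tbar := real (Lub_Rbar (fun t => dom R0 t /\ f' t < 0))) in *.
assert (tbar_pos : 0 < tbar).
{ destruct (cont_eps _ _ _ (proj2 (hC1 0 ltac:(unfold dom; lra))) 1 ltac:(lra)) as [d [dp Hd]].
  set (s := Rmin (d/2) (R0/2)).
  assert (s0 : 0 < s) by (apply Rmin_pos; lra).
  assert (s1 : s <= d/2) by apply Rmin_l.
  assert (s2 : s <= R0/2) by apply Rmin_r.
  assert (Hs := Hd s). rewrite h1b in Hs.
  assert (Hs' : Rabs (f' s - -1) < 1).
  { apply Hs. rewrite Rminus_0_r, Rabs_pos_eq; lra. split; lra. }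
  apply Rabs_def2 in Hs'.
  assert (s <= tbar). { apply Tub. split. split; lra. lra. } lra. }
assert (tbar_le : tbar <= R0). { apply Tl. intros x [[_ Hx] _]; lra. }
assert (i1 : forall t, 0 <= t < tbar -> f' t < 0).
{ intros t Ht. apply Rnot_le_lt; intro Hge.
  assert (tbar <= t); [|lra]. apply Tl. intros x [[x0 xR] fx].
  apply Rnot_lt_le; intro Hxt.
  assert (f' t < f' x) by (apply h2a; unfold dom; lra). lra. }
assert (i2 : forall t, dom R0 t -> ~ (0 <= t < tbar) -> 0 <= f' t).
{ intros t [t0 tR] Hn. apply Rnot_lt_le; intro Hneg.
  assert (Hge : tbar <= t) by (apply Rnot_lt_le; intro; apply Hn; lra).
  assert (t <= tbar) by (apply Tub; split; [split|]; lra).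
  destruct (cont_eps _ _ _ (proj2 (hC1 t ltac:(unfold dom; lra))) (- f' t) ltac:(lra)) as [d [dp Hd]].
  set (s := t + Rmin (d/2) ((R0 - t)/2)).
  assert (s0 : 0 < Rmin (d/2) ((R0 - t)/2)) by (apply Rmin_pos; lra).
  assert (s1 : Rmin (d/2) ((R0 - t)/2) <= d/2) by apply Rmin_l.
  assert (s2 : Rmin (d/2) ((R0 - t)/2) <= (R0-t)/2) by apply Rmin_r.
  assert (Hs' : Rabs (f' s - f' t) < - f' t).
  { apply Hd. unfold s. replace (t + Rmin (d / 2) ((R0 - t) / 2) - t) with (Rmin (d / 2) ((R0 - t) / 2)) by ring.
    rewrite Rabs_pos_eq; lra. unfold s; split; lra. }
  apply Rabs_def2 in Hs'.
  assert (sr : t < s < R0) by (unfold s; lra).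
  assert (s <= tbar) by (apply Tub; split; [split|]; lra).
  lra. }
assert (dec : forall a b, 0 <= a < b -> b <= tbar -> b < R0 -> f b < f a).
{ intros a b Ha Hb HR. destruct (mvt R0 f f' a b hC1) as [c [Hc Hm]]; try lra.
  assert (f' c < 0) by (apply i1; lra).
  assert (f' c * (b - a) < 0). { apply Rmult_neg_pos; lra. } lra. }
assert (inc : forall a b, tbar <= a <= b -> b < R0 -> f a <= f b).
{ intros a b Ha HR. destruct (Req_dec a b) as [e|ne]. subst; lra.
  destruct (mvt R0 f f' a b hC1) as [c [Hc Hm]]; try lra.
  assert (0 <= f' c) by (apply i2; unfold dom; lra).
  assert (0 <= f' c * (b - a)). { apply Rmult_le_pos; lra. } lra. }
assert (lowbd : forall a b, 0 <= a <= b -> b < R0 -> f a - (b - a) <= f b).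
{ intros a b Ha HR. destruct (Req_dec a b) as [e|ne]. subst; lra.
  destruct (mvt R0 f f' a b hC1) as [c [Hc Hm]]; try lra.
  assert (f' c > -1) by (apply fpm1; lra).
  assert (-1 * (b - a) <= f' c * (b - a)). { apply Rmult_le_compat_r; lra. } lra. }
assert (Hz : exists z, 0 < z < tbar /\ f z = 0).
{ destruct (Rlt_le_dec t1 tbar) as [Hlt|Hge].
  - destruct (ivt R0 f f' 0 t1 hC1) as [z [Hz1 Hz2]]; try lra.
    exists z. split; [|exact Hz2]. split; [|lra].
    destruct (Req_dec z 0) as [e|ne]; [subst; lra| lra].
  - assert (f tbar < 0) by (assert (f tbar <= f t1) by (apply inc; lra); lra).
    destruct (ivt R0 f f' 0 tbar hC1) as [z [Hz1 Hz2]]; try lra.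
    exists z. split; [|exact Hz2].
    destruct (Req_dec z 0) as [e|ne]; [subst; lra|].
    destruct (Req_dec z tbar) as [e|ne']; [subst; lra| lra]. }
destruct Hz as [z [Hz Hfz]].
destruct (lub_fin (fun t => dom R0 t /\ f t < 0) t1 R0) as [Ufin [Uub [Ul Uapp]]].
{ split; [split; lra | lra]. }
{ intros x [[_ Hx] _]; lra. }
set (taubar := real (Lub_Rbar (fun t => dom R0 t /\ f t < 0))) in *.
destruct (lub_fin (fun x => exists t, dom R0 t /\ x = - f t) (- f 0) (R0 - f 0)) as [Bfin [Bub [Bl Bapp]]].
{ exists 0; split; [split; lra | reflexivity]. }
{ intros x [t [[t0 tR] ->]]. assert (f 0 - (t - 0) <= f t) by (apply lowbd; lra). lra. }
set (b := real (Lub_Rbar (fun x => exists t, dom R0 t /\ x = - f t))) in *.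
assert (approx : forall eps, 0 < eps -> exists s, 0 <= s < tbar /\ b - eps < - f s).
{ intros eps he. destruct (Bapp eps he) as [x [[t [[t0 tR] ->]] Ht]].
  destruct (Rlt_le_dec t tbar) as [Hlt|Hge].
  - exists t; split; [lra|exact Ht].
  - assert (f tbar <= f t) by (apply inc; lra).
    set (dl := - f tbar - (b - eps)).
    assert (dlp : 0 < dl) by (unfold dl; lra).
    set (s := Rmax 0 (tbar - dl/2)).
    assert (sa : 0 <= s) by apply Rmax_l.
    assert (sb : tbar - dl/2 <= s) by apply Rmax_r.
    assert (sc : s < tbar) by (unfold s; apply Rmax_lub_lt; lra).
    exists s. split; [lra|].
    assert (f s - (tbar - s) <= f tbar) by (apply lowbd; lra).
    unfold dl in *; lra. }
split; [exact i1|]. split; [exact i2|]. split.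
- exists z. split.
  + split; [unfold dom; lra|]. split; [exact Hfz|].
    intros s [s0 sR] Hs. apply Rnot_lt_le; intro Hlt.
    assert (f z < f s) by (apply dec; lra). lra.
  + split; [lra|]. split; [lra|]. split.
    * apply Rnot_lt_le; intro Hlt.
      set (s := (Rmax taubar z + tbar) / 2).
      assert (m1 : taubar <= Rmax taubar z) by apply Rmax_l.
      assert (m2 : z <= Rmax taubar z) by apply Rmax_r.
      assert (m3 : Rmax taubar z < tbar) by (apply Rmax_lub_lt; lra).
      assert (sr : Rmax taubar z < s < tbar) by (unfold s; lra).
      assert (f s < f z) by (apply dec; lra).
      assert (s <= taubar) by (apply Uub; unfold dom; split; [split|]; lra).
      lra.
    * apply Ul. intros x [[_ Hx] _]; lra.
- exists b. split; [exact Bfin|]. split; [|split].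
  + apply filterlim_locally. intros eps.
    destruct (approx eps (cond_pos eps)) as [s [Hs Hfs]].
    assert (P : 0 < tbar - s) by lra.
    exists (mkposreal _ P). intros u Hu Hlt. simpl in Hu.
    apply ballR. apply ballR in Hu. apply Rabs_def2 in Hu.
    change (minus u tbar) with (u - tbar) in Hu. assert (f u < f s) by (apply dec; lra).
    assert (- f u <= b) by (apply Bub; exists u; split; [split|]; lra).
    apply Rabs_def1; lra.
  + assert (- f t1 <= b) by (apply Bub; exists t1; split; [split|]; lra). lra.
  + destruct (approx (f 0) h1a) as [s [Hs Hfs]].
    assert (f 0 - (s - 0) <= f s) by (apply lowbd; lra). lra.
Qed.
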